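(* Let $\theta_{\mathcal S}$, $\theta_{\mathcal E}$ be antiunitary involutions on finite-dimensional Hilbert spaces $\mathcal H_{\mathcal S}$, $\mathcal H_{\mathcal E}$ with $\theta_{\mathcal S}H_{\mathcal S}=H_{\mathcal S}\theta_{\mathcal S}$ and $\theta_{\mathcal E}H_{\mathcal E}=H_{\mathcal E}\theta_{\mathcal E}$ for self-adjoint $H_{\mathcal S},H_{\mathcal E}$, and let $V$ be a self-adjoint operator on $\mathcal H_{\mathcal S}\otimes\mathcal H_{\mathcal E}$ with $(\theta_{\mathcal S}\otimes\theta_{\mathcal E})V=V(\theta_{\mathcal S}\otimes\theta_{\mathcal E})$. Let $\tau>0$ and let $\rho_{\mathcal E}$ be a state on $\mathcal H_{\mathcal E}$ with $\theta_{\mathcal E}\rho_{\mathcal E}\theta_{\mathcal E}=\rho_{\mathcal E}$. Let $U=e^{-i\tau H}$ with $H=H_{\mathcal S}\otimes\mathrm{Id}+\mathrm{Id}\otimes H_{\mathcal E}+V$, and $\mathcal L(\rho)=\mathrm{Tr}_{\mathcal H_{\mathcal E}}(U(\rho\otimes\rho_{\mathcal E})U^* )$. If $\mathcal L$ is primitive and its unique invariant state $\rho$ satisfies $U(\rho\otimes\rho_{\mathcal E})U^*=\mathcal L(\rho)\otimes\rho_{\mathcal E}$, then, with $\Theta(X)=\theta_{\mathcal S}X\theta_{\mathcal S}$, one has $\Theta(\rho)=\rho$ and $\Theta\circ\mathcal L^*\circ\Theta=\mathcal L^{*\rho}$, i.e. the pair $(\mathcal L,\rho)$ is time-reversal inv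ariant.
   Context: $\mathcal L^*$ is the dual (Heisenberg) map of $\mathcal L$: $\mathrm{Tr}(\mathcal L(\rho)A)=\mathrm{Tr}(\rho\mathcal L^*(A))$. $\mathcal L^{*\rho}$ is the adjoint of $\mathcal L^*$ with respect to the inner product $\langle A,B\rangle_\rho=\mathrm{Tr}(\rho A^*B)$ on operators on $\mathcal H_{\mathcal S}$. A CP map with Kraus operators $V_i$ is primitive if for some $n$ the products $V_{i_1}\cdots V_{i_n}$ span all operators on $\mathcal H_{\mathcal S}$. *)

(* Defs.v *)
From HB Require Import structures.
From mathcomp Require Import all_boot all_order all_algebra.
From mathcomp Require Import all_classical all_reals all_analysis.
From mathcomp Require Import complex mxtens.
Set Implicit Arguments. Unset Strict Implicit. Unset Printing Implicit Defensive.
Import Order.TTheory GRing.Theory Num.Theory.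
Import numFieldNormedType.Exports.
Local Open Scope ring_scope.

Section QDefs.
Variable R : realType.
Local Notation C := (R[i]).

Definition adjmx m n (A : 'M[C]_(m, n)) : 'M[C]_(n, m) := map_mx (@conjc R) A^T.

(* standard inner product <u, v> on C^n (antilinear in the first argument) *)
Definition cdot n (u v : 'cV[C]_n) : C := (adjmx u *m v) 0 0.

Definition selfadj n (A : 'M[C]_n) : Prop := adjmx A = A.

Definition psd n (A : 'M[C]_n) : Prop :=
  selfadj A /\ forall v : 'cV[C]_n, 0 <= cdot v (A *m v).
Definition is_state n (rho : 'M[C]_n) : Prop := psd rho /\ \tr rho = 1.

Definition antiunitary n (th : 'cV[C]_n -> 'cV[C]_n) : Prop :=
  (forall (a : C) u v, th (a *: u + v) = conjc a *: th u + th v) /\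
  (forall u v, cdot (th u) (th v) = conjc (cdot u v)).
Definition antiunitary_involution n (th : 'cV[C]_n -> 'cV[C]_n) : Prop :=
  antiunitary th /\ forall v, th (th v) = v.

Definition mx_of n (f : 'cV[C]_n -> 'cV[C]_n) : 'M[C]_n :=
  \matrix_(i, j) f (delta_mx j 0) i 0.

(* tensor product θ_S ⊗ θ_E of two antilinear maps: the antilinear map
   v ↦ (T_S ⊗ T_E) conj(v), where T = mx_of θ (so θ v = T conj(v)); it is the
   unique antilinear map with (θ_S ⊗ θ_E)(u ⊗ w) = θ_S u ⊗ θ_E w. *)
Definition tens_anti n m (thS : 'cV[C]_n -> 'cV[C]_n) (thE : 'cV[C]_m -> 'cV[C]_m)
  (v : 'cV[C]_(n * m)) : 'cV[C]_(n * m) :=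
  (mx_of thS *t mx_of thE) *m map_mx (@conjc R) v.

Definition conj_anti n (th : 'cV[C]_n -> 'cV[C]_n) (X : 'M[C]_n) : 'M[C]_n :=
  mx_of (fun v => th (X *m th v)).

Definition ptrE n m (X : 'M[C]_(n * m)) : 'M[C]_n :=
  \matrix_(i, k) \sum_(j < m) X (mxtens_index (i, j)) (mxtens_index (k, j)).

Definition expmx n (A : 'M[C]_n) : 'M[C]_n :=
  let S := fun N : nat => \sum_(k < N) (k`!%:R)^-1 *: A ^+ k in
  \matrix_(i, j) Complex (limn (fun N => complex.Re (S N i j))) (limn (fun N => complex.Im (S N i j))).

(* dual (Heisenberg) map: Tr(L(rho) A) = Tr(rho L^*(A)) *)
Definition dualmap n (L : 'M[C]_n -> 'M[C]_n) (A : 'M[C]_n) : 'M[C]_n :=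
  \matrix_(i, j) \tr (L (delta_mx j i) *m A).

Definition ip_rho n (rho A B : 'M[C]_n) : C := \tr (rho *m adjmx A *m B).

Definition primitive n (L : 'M[C]_n -> 'M[C]_n) : Prop :=
  exists (k : nat) (Vs : 'I_k -> 'M[C]_n),
    (forall X, L X = \sum_(i < k) Vs i *m X *m adjmx (Vs i)) /\
    exists N : nat, forall X : 'M[C]_n,
      exists c : N.-tuple 'I_k -> C,
        X = \sum_(s : N.-tuple 'I_k) c s *: \prod_(l < N) Vs (tnth s l).

End QDefs.

(* Main.v *)
Require Import Defs.
From HB Require Import structures.
From mathcomp Require Import all_boot all_order all_algebra.
From mathcomp Require Import all_classical all_reals all_analysis.
From mathcomp Require Import complex mxtens.
From mathcomp Require Import zify ring lra.
Import Order.TTheory GRing.Theory Num.Theory.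
Import numFieldNormedType.Exports.
Set Implicit Arguments. Unset Strict Implicit. Unset Printing Implicit Defensive.
Local Open Scope classical_set_scope.
Local Open Scope ring_scope.
Local Open Scope complex_scope.
Lemma tri_sum (V : zmodType) (f : nat -> nat -> V) N :
  \sum_(0 <= k < N) \sum_(0 <= l < N | (k + l < N)%N) f k l =
  \sum_(0 <= m < N) \sum_(0 <= i < m.+1) f (m - i)%N i.
Proof.
elim: N => [|N IH]; first by rewrite !big_geq.
rewrite [RHS]big_nat_recr //= -IH.
have E : forall k, (k < N.+1)%N ->
  \sum_(0 <= l < N.+1 | (k + l < N.+1)%N) f k l =
  \sum_(0 <= l < N.+1 | (k + l < N)%N) f k l + f k (N - k)%N.
  move=> k kN.
  rewrite (bigID (fun l => (k + l < N)%N)) /=; congr (_ + _).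
    by apply: eq_bigl => l; apply/andP/idP => [[]|h] //; split => //; lia.
  have hk : (N - k < N.+1)%N by lia.
  rewrite big_mkord (big_pred1 (Ordinal hk)) //= => l /=.
  apply/andP/eqP => [[h1 h2]|->] /=; last by split; lia.
  by apply: val_inj => /=; lia.
rewrite (eq_big_nat _ _ (fun k (hk : (0 <= k < N.+1)%N) => E k (proj2 (andP hk)))) big_split /=; congr (_ + _).
  rewrite big_nat_recr //= [X in _ + X]big1_seq => [|l /andP[h _]]; last by exfalso; lia.
  rewrite addr0; apply: eq_big_nat => k /andP[_ kN].
  rewrite big_mkcond big_nat_recr //= ifN; last by apply/negP; lia.
  by rewrite addr0 -big_mkcond.
rewrite big_nat_rev /= add0n; apply: eq_big_nat => i /andP[_ iN].
by rewrite subSS subKn // -ltnS.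
Qed.

Lemma cauchy_split (V : zmodType) (f : nat -> nat -> V) N :
  \sum_(0 <= k < N) \sum_(0 <= l < N) f k l =
  \sum_(0 <= m < N) \sum_(0 <= i < m.+1) f (m - i)%N i +
  \sum_(0 <= k < N) \sum_(0 <= l < N | (N <= k + l)%N) f k l.
Proof.
rewrite -tri_sum -big_split /=; apply: eq_bigr => k _.
rewrite (bigID (fun l => (k + l < N)%N)) /=; congr (_ + _).
by apply: eq_bigl => l; rewrite -leqNgt.
Qed.

Lemma fact_nz (F : numFieldType) k : (k`!%:R : F) != 0.
Proof. by rewrite pnatr_eq0 -lt0n fact_gt0. Qed.

Lemma coef_binom (F : numFieldType) m i : (i <= m)%N ->
  ((m - i)`!%:R^-1 * i`!%:R^-1 : F) = m`!%:R^-1 * 'C(m, i)%:R.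
Proof.
move=> im; have := bin_fact im.
move/(congr1 (fun n => n%:R : F)); rewrite !natrM => <-.
have h1 := fact_nz F i; have h2 := fact_nz F (m - i).
have h3 : ('C(m, i)%:R : F) != 0 by rewrite pnatr_eq0 -lt0n bin_gt0.
by field; apply/and3P; split.
Qed.

Lemma binom_sum (F : numFieldType) (x y : F) m :
  \sum_(0 <= i < m.+1) ((m - i)`!%:R^-1 * i`!%:R^-1) * (x ^+ (m - i) * y ^+ i)
  = m`!%:R^-1 * (x + y) ^+ m.
Proof.
rewrite exprDn mulr_sumr big_mkord; apply: eq_bigr => i _.
rewrite coef_binom; last by rewrite -ltnS ltn_ord.
by rewrite -mulrA mulr_natl.
Qed.

Section CCvg.
Variable R : realType.
Local Notation C := (R[i]).
Local Notation Re := (@complex.Re R).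
Local Notation Im := (@complex.Im R).

Lemma ReD (x y : C) : Re (x + y) = Re x + Re y. Proof. by case: x; case: y. Qed.
Lemma ImD (x y : C) : Im (x + y) = Im x + Im y. Proof. by case: x; case: y. Qed.
Lemma ReM (x y : C) : Re (x * y) = Re x * Re y - Im x * Im y. Proof. by case: x; case: y. Qed.
Lemma ImM (x y : C) : Im (x * y) = Re x * Im y + Im x * Re y. Proof. by case: x => a b; case: y => c d /=; rewrite addrC. Qed.
Lemma ReJ (x : C) : Re (conjc x) = Re x. Proof. by case: x. Qed.
Lemma ImJ (x : C) : Im (conjc x) = - Im x. Proof. by case: x. Qed.
Lemma ReN (x : C) : Re (- x) = - Re x. Proof. by case: x. Qed.
Lemma ImN (x : C) : Im (- x) = - Im x. Proof. by case: x. Qed.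
Lemma Re0 : Re 0 = 0. Proof. by []. Qed.
Lemma Im0 : Im 0 = 0. Proof. by []. Qed.

Definition ccvg (u : nat -> C) (l : C) :=
  (fun N => Re (u N)) @ \oo --> Re l /\ (fun N => Im (u N)) @ \oo --> Im l.

Lemma ccvg_ext u v l : (forall N, u N = v N) -> ccvg u l -> ccvg v l.
Proof. by move=> e; have -> : u = v by apply: funext. Qed.

Lemma ccvg_cst c : ccvg (fun=> c) c.
Proof. by split; apply: cvg_cst. Qed.

Lemma ccvgD u v a b : ccvg u a -> ccvg v b -> ccvg (fun N => u N + v N) (a + b).
Proof.
move=> [ha1 ha2] [hb1 hb2]; split.
  rewrite ReD; under eq_fun do rewrite ReD; exact: cvgD.
rewrite ImD; under eq_fun do rewrite ImD; exact: cvgD.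
Qed.

Lemma ccvgM u v a b : ccvg u a -> ccvg v b -> ccvg (fun N => u N * v N) (a * b).
Proof.
move=> [ha1 ha2] [hb1 hb2]; split.
  rewrite ReM; under eq_fun do rewrite ReM; apply: cvgB; exact: cvgM.
rewrite ImM; under eq_fun do rewrite ImM; apply: cvgD; exact: cvgM.
Qed.

Lemma ccvgJ u a : ccvg u a -> ccvg (fun N => conjc (u N)) (conjc a).
Proof.
move=> [h1 h2]; split; first by rewrite ReJ; under eq_fun do rewrite ReJ.
rewrite ImJ; under eq_fun do rewrite ImJ; exact: cvgN.
Qed.

Lemma ccvg_sum (I : Type) (s : seq I) (P : pred I) (F : I -> nat -> C) (L : I -> C) :
  (forall i, P i -> ccvg (F i) (L i)) ->
  ccvg (fun N => \sum_(i <- s | P i) F i N) (\sum_(i <- s | P i) L i).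
Proof.
move=> h; elim: s => [|x s IH].
  by rewrite big_nil; apply: (ccvg_ext _ (ccvg_cst 0)) => N; rewrite big_nil.
rewrite [X in ccvg _ X]big_cons; case: ifP => Px.
  by apply: (ccvg_ext _ (ccvgD (h x Px) IH)) => N; rewrite big_cons Px.
by apply: (ccvg_ext _ IH) => N; rewrite big_cons Px.
Qed.

Lemma ccvg_unique u a b : ccvg u a -> ccvg u b -> a = b.
Proof.
move=> [a1 a2] [b1 b2].
have e1 : Re a = Re b by rewrite -(cvg_lim _ a1) // (cvg_lim _ b1).
have e2 : Im a = Im b by rewrite -(cvg_lim _ a2) // (cvg_lim _ b2).
by move: e1 e2 {a1 a2 b1 b2}; case: a; case: b => /= ? ? ? ? -> ->.
Qed.

Lemma norm_ReIm (z : C) (e : R) : `|z| <= e%:C -> `|Re z| <= e /\ `|Im z| <= e.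
Proof.
rewrite normc_def lecR => h; split; apply: le_trans h.
  rewrite -sqrtr_sqr; apply: ler_wsqrtr; rewrite lerDl; exact: sqr_ge0.
rewrite -sqrtr_sqr; apply: ler_wsqrtr; rewrite lerDr; exact: sqr_ge0.
Qed.

Lemma squeeze_dist (x e : nat -> R) (a : R) : (forall N, (0 < N)%N -> `|x N - a| <= e N) ->
  e @ \oo --> 0 -> x @ \oo --> a.
Proof.
move=> h he; apply: (@squeeze_cvgr _ _ _ _ (fun N => a - e N) (fun N => a + e N)).
- near=> N.
  have N0 : (0 < N)%N by near: N; exists 1%N.
  by have := h N N0; rewrite ler_distl => /andP[h1 h2]; apply/andP; split; lra.
- by rewrite -[X in _ --> X]subr0; apply: cvgB => //; apply: cvg_cst.
- by rewrite -[X in _ --> X]addr0; apply: cvgD => //; apply: cvg_cst.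
Unshelve. all: by end_near. Qed.

Lemma ccvg_le u l (e : nat -> R) : (forall N, (0 < N)%N -> `|u N - l| <= (e N)%:C) ->
  e @ \oo --> 0 -> ccvg u l.
Proof.
move=> h he; split; apply: (squeeze_dist _ he) => N N0; have [h1 h2] := norm_ReIm (h N N0).
  by move: h1; rewrite ReD ReN.
by move: h2; rewrite ImD ImN.
Qed.

End CCvg.

Section MxCvg.
Variable R : realType.
Local Notation C := (R[i]).
Local Notation Re := (@complex.Re R).
Local Notation Im := (@complex.Im R).

Definition mxcvg m n (M : nat -> 'M[C]_(m, n)) (L : 'M[C]_(m, n)) :=
  forall i j, ccvg (fun N => M N i j) (L i j).

Lemma mxcvg_ext m n (M P : nat -> 'M[C]_(m, n)) L :
  (forall N, M N = P N) -> mxcvg M L -> mxcvg P L.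
Proof. by move=> e; have -> : M = P by apply: funext. Qed.

Lemma mxcvg_cst m n (X : 'M[C]_(m, n)) : mxcvg (fun=> X) X.
Proof. by move=> i j; apply: ccvg_cst. Qed.

Lemma mxcvg_mul m n p (M : nat -> 'M[C]_(m, n)) (P : nat -> 'M[C]_(n, p)) X Y :
  mxcvg M X -> mxcvg P Y -> mxcvg (fun N => M N *m P N) (X *m Y).
Proof.
move=> hM hP i j; rewrite mxE; apply: ccvg_ext; last first.
  by apply: ccvg_sum => k _; apply: ccvgM; [apply: hM | apply: hP].
by move=> N /=; rewrite mxE.
Qed.

Lemma mxcvg_conj m n (M : nat -> 'M[C]_(m, n)) X :
  mxcvg M X -> mxcvg (fun N => map_mx conjc (M N)) (map_mx conjc X).
Proof.
move=> h i j; rewrite mxE; apply: ccvg_ext (ccvgJ (h i j)) => N.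
by rewrite mxE.
Qed.

Lemma mxcvg_tr m n (M : nat -> 'M[C]_(m, n)) X :
  mxcvg M X -> mxcvg (fun N => (M N)^T) X^T.
Proof.
move=> h i j; rewrite mxE; apply: ccvg_ext (h j i) => N.
by rewrite mxE.
Qed.

Lemma mxcvg_adj m n (M : nat -> 'M[C]_(m, n)) X :
  mxcvg M X -> mxcvg (fun N => adjmx (M N)) (adjmx X).
Proof. by move=> h; apply: mxcvg_conj; apply: mxcvg_tr. Qed.

Lemma mxcvg_unique m n (M : nat -> 'M[C]_(m, n)) X Y :
  mxcvg M X -> mxcvg M Y -> X = Y.
Proof.
by move=> hX hY; apply/matrixP => i j; apply: ccvg_unique (hX i j) (hY i j).
Qed.

Lemma mxcvg_le m n (M : nat -> 'M[C]_(m, n)) (L : 'M[C]_(m, n)) (e : nat -> R) :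
  (forall N, (0 < N)%N -> forall i j, `|M N i j - L i j| <= (e N)%:C) -> e @ \oo --> 0 -> mxcvg M L.
Proof. by move=> h he i j; apply: ccvg_le he => N N0; apply: h. Qed.

End MxCvg.

Section Exp.
Variable R : realType.
Local Notation C := (R[i]).
Local Notation Re := (@complex.Re R).
Local Notation Im := (@complex.Im R).
Variable n : nat.

Definition expS (A : 'M[C]_n) N := \sum_(k < N) (k`!%:R)^-1 *: A ^+ k.

Lemma expmxE (A : 'M[C]_n) : expmx A =
  \matrix_(i, j) Complex (limn (fun N => Re (expS A N i j))) (limn (fun N => Im (expS A N i j))).
Proof. by []. Qed.

Definition normc (z : C) : R := Num.sqrt (Re z ^+ 2 + Im z ^+ 2).

Lemma normc_ge0 (z : C) : 0 <= normc z.
Proof. by apply: sqrtr_ge0. Qed.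

Lemma normcE (z : C) : `|z| = (normc z)%:C.
Proof. by rewrite normc_def. Qed.

Definition mxs (A : 'M[C]_n) : R := \sum_i \sum_j normc (A i j).
Definition mxb (A : 'M[C]_n) : R := n%:R * mxs A.

Lemma mxs_ge0 A : 0 <= mxs A.
Proof. by apply: sumr_ge0 => i _; apply: sumr_ge0 => j _; apply: normc_ge0. Qed.

Lemma mxb_ge0 A : 0 <= mxb A.
Proof. by apply: mulr_ge0 => //; apply: mxs_ge0. Qed.

Lemma entry_le (A : 'M[C]_n) i j : `|A i j| <= (mxs A)%:C.
Proof.
rewrite normcE lecR /mxs (bigD1 i) //= (bigD1 j) //= -addrA lerDl.
apply: addr_ge0; first by apply: sumr_ge0 => j' _; apply: normc_ge0.
by apply: sumr_ge0 => i' _; apply: sumr_ge0 => j' _; apply: normc_ge0.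
Qed.

Lemma pow_bound (A : 'M[C]_n) k i j : `|(A ^+ k) i j| <= ((mxb A) ^+ k)%:C.
Proof.
elim: k i j => [|k IH] i j.
  rewrite expr0 expr0 mxE; case: (i == j) => /=; first by rewrite normr1.
  by rewrite normr0 lecR ler01.
rewrite exprSr -mulmxE mxE.
apply: (le_trans (ler_norm_sum _ _ _)).
apply: (@le_trans _ _ (\sum_(l < n) ((mxb A) ^+ k)%:C * (mxs A)%:C)).
  by apply: ler_sum => l _; rewrite normrM; apply: ler_pM; [exact: normr_ge0|exact: normr_ge0|exact: IH | exact: entry_le].
rewrite sumr_const card_ord -mulr_natr exprSr /mxb !rmorphM /= rmorph_nat.
by rewrite -mulrA [X in _ * X]mulrC.
Qed.

Lemma Re_sum (I : Type) (s : seq I) (P : pred I) (F : I -> C) :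
  Re (\sum_(i <- s | P i) F i) = \sum_(i <- s | P i) Re (F i).
Proof.
apply: (big_ind2 (fun x y => Re x = y)) => // x1 x2 y1 y2 <- <-.
by rewrite ReD.
Qed.

Lemma Im_sum (I : Type) (s : seq I) (P : pred I) (F : I -> C) :
  Im (\sum_(i <- s | P i) F i) = \sum_(i <- s | P i) Im (F i).
Proof.
apply: (big_ind2 (fun x y => Im x = y)) => // x1 x2 y1 y2 <- <-.
by rewrite ImD.
Qed.

Lemma term_bound (A : 'M[C]_n) k i j :
  `|((k`!%:R)^-1 *: A ^+ k) i j| <= (exp_coeff (mxb A) k)%:C.
Proof.
rewrite mxE normrM normfV normr_nat /exp_coeff /= mulrC rmorphM /= fmorphV /= rmorph_nat.
by apply: ler_pM => //; last exact: pow_bound.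
Qed.

Lemma series_cvg_aux (u : nat -> R) (b : R) : 0 <= b ->
  (forall k, `|u k| <= exp_coeff b k) -> cvgn (series u).
Proof.
move=> b0 h; apply: (@normed_cvg _ R^o).
apply: (@series_le_cvg R (fun k => `|u k|) (exp_coeff b)) => //.
- by move=> k; apply: exp_coeff_ge0.
- exact: is_cvg_series_exp_coeff.
Qed.

Lemma expS_cvg (A : 'M[C]_n) : mxcvg (expS A) (expmx A).
Proof.
move=> i j; rewrite expmxE mxE /=.
have b0 := mxb_ge0 A.
split.
  have E : (fun N => Re (expS A N i j)) = series (fun k => Re (((k`!%:R)^-1 *: A ^+ k) i j)).
    by apply: funext => N; rewrite /series /= /expS summxE Re_sum big_mkord.
  by rewrite E; apply: (series_cvg_aux b0) => k; case: (norm_ReIm (term_bound A k i j)).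
have E : (fun N => Im (expS A N i j)) = series (fun k => Im (((k`!%:R)^-1 *: A ^+ k) i j)).
  by apply: funext => N; rewrite /series /= /expS summxE Im_sum big_mkord.
by rewrite E; apply: (series_cvg_aux b0) => k; case: (norm_ReIm (term_bound A k i j)).
Qed.

End Exp.

Section ExpProps.
Variable R : realType.
Local Notation C := (R[i]).
Local Notation Re := (@complex.Re R).
Local Notation Im := (@complex.Im R).
Variable n : nat.
Implicit Types A W X Y : 'M[C]_n.

Lemma map_mxX (f : {rmorphism C -> C}) A k : map_mx f (A ^+ k) = (map_mx f A) ^+ k.
Proof.
elim: k => [|k IH]; first by rewrite !expr0 map_mx1.
by rewrite !exprS -!mulmxE map_mxM IH.
Qed.

Lemma cj_expS A N : map_mx conjc (expS A N) = expS (map_mx conjc A) N.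
Proof.
rewrite /expS map_mx_sum; apply: eq_bigr => k _.
by rewrite map_mxZ map_mxX fmorphV /= conjc_nat.
Qed.

Lemma expmx_conj A : map_mx conjc (expmx A) = expmx (map_mx conjc A).
Proof.
apply: (@mxcvg_unique _ _ _ (fun N => map_mx conjc (expS A N))).
  exact: mxcvg_conj (expS_cvg A).
by apply: mxcvg_ext (expS_cvg _) => N; rewrite cj_expS.
Qed.

Lemma trmxX A k : (A ^+ k)^T = (A^T) ^+ k.
Proof.
elim: k => [|k IH]; first by rewrite !expr0 trmx1.
by rewrite exprS exprSr -!mulmxE trmx_mul IH.
Qed.

Lemma tr_expS A N : (expS A N)^T = expS A^T N.
Proof.
apply/matrixP => i j; rewrite mxE !summxE; apply: eq_bigr => k _.
by rewrite -trmxX !mxE.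
Qed.

Lemma expmx_tr A : (expmx A)^T = expmx A^T.
Proof.
apply: (@mxcvg_unique _ _ _ (fun N => (expS A N)^T)).
  exact: mxcvg_tr (expS_cvg A).
by apply: mxcvg_ext (expS_cvg _) => N; rewrite tr_expS.
Qed.

Lemma expmx_adj A : adjmx (expmx A) = expmx (adjmx A).
Proof. by rewrite /adjmx expmx_tr expmx_conj. Qed.

Lemma pow_comm W X Y : W *m X = Y *m W -> forall k, W *m X ^+ k = Y ^+ k *m W.
Proof.
move=> h; elim=> [|k IH]; first by rewrite !expr0 mulmx1 mul1mx.
by rewrite !exprSr -!mulmxE mulmxA IH -mulmxA h mulmxA.
Qed.

Lemma expmx_comm W X Y : W *m X = Y *m W -> W *m expmx X = expmx Y *m W.
Proof.
move=> h.
apply: (@mxcvg_unique _ _ _ (fun N => W *m expS X N)).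
  exact: mxcvg_mul (mxcvg_cst W) (expS_cvg X).
apply: mxcvg_ext (mxcvg_mul (expS_cvg Y) (mxcvg_cst W)) => N.
rewrite /expS mulmx_suml mulmx_sumr; apply: eq_bigr => k _.
by rewrite -scalemxAl -scalemxAr (pow_comm h).
Qed.

Lemma mxb_opp A : mxb (- A) = mxb A.
Proof.
rewrite /mxb /mxs; congr (_ * _); apply: eq_bigr => i _; apply: eq_bigr => j _.
by rewrite mxE /normc ReN ImN !sqrrN.
Qed.

Lemma prod_bound X Y (x y : R) : (forall i j, `|X i j| <= x%:C) ->
  (forall i j, `|Y i j| <= y%:C) -> forall i j, `|(X *m Y) i j| <= (n%:R * (x * y))%:C.
Proof.
move=> hX hY i j; rewrite mxE.
apply: (le_trans (ler_norm_sum _ _ _)).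
apply: (@le_trans _ _ (\sum_(l < n) x%:C * y%:C)).
  by apply: ler_sum => l _; rewrite normrM; apply: ler_pM; [exact: normr_ge0|exact: normr_ge0|exact: hX|exact: hY].
by rewrite sumr_const card_ord !rmorphM /= rmorph_nat mulr_natl.
Qed.

Lemma expS_prod A N : expS A N *m expS (- A) N =
  \sum_(0 <= k < N) \sum_(0 <= l < N) ((k`!%:R^-1 * l`!%:R^-1) *: (A ^+ k *m (- A) ^+ l)).
Proof.
rewrite big_mkord /expS mulmx_suml; apply: eq_bigr => k _.
rewrite big_mkord mulmx_sumr; apply: eq_bigr => l _.
by rewrite -scalemxAl -scalemxAr scalerA.
Qed.

Lemma negpow A l : (- A) ^+ l = ((-1) ^+ l : C) *: A ^+ l.
Proof.
elim: l => [|l IH]; first by rewrite !expr0 scale1r.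
by rewrite !exprS IH -!mulmxE mulNmx -scalemxAr mulN1r scaleNr.
Qed.

Lemma mid_sum A N : (0 < N)%N ->
  \sum_(0 <= m < N) \sum_(0 <= i < m.+1)
     (((m - i)`!%:R^-1 * i`!%:R^-1) *: (A ^+ (m - i) *m (- A) ^+ i)) = 1.
Proof.
move=> N0.
have E : forall m, \sum_(0 <= i < m.+1)
     (((m - i)`!%:R^-1 * i`!%:R^-1) *: (A ^+ (m - i) *m (- A) ^+ i))
   = (m`!%:R^-1 * (1 + -1) ^+ m : C) *: A ^+ m.
  move=> m; rewrite -binom_sum scaler_suml; apply: eq_big_nat => i /andP[_ im].
  rewrite negpow -scalemxAr mulmxE -exprD subnK; last by rewrite -ltnS.
  by rewrite scalerA expr1n mul1r.
rewrite (eq_bigr _ (fun m _ => E m)) big_ltn // big1_seq ?addr0.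
  by rewrite fact0 invr1 expr0 mulr1 scale1r expr0.
move=> m /andP[_]; rewrite mem_index_iota => /andP[m1 _].
by rewrite subrr expr0n gtn_eqF //= ?mulr0n mulr0 scale0r.
Qed.

Definition Etail (b : R) N := \sum_(0 <= k < N) \sum_(0 <= l < N | (N <= k + l)%N)
   ((k`!%:R^-1 * l`!%:R^-1) * (b ^+ k * b ^+ l)).

Lemma unit_bound A N : (0 < N)%N -> forall i j,
  `|(expS A N *m expS (- A) N) i j - (1 : 'M[C]_n) i j| <= (n%:R * Etail (mxb A) N)%:C.
Proof.
move=> N0 i j.
have -> : (expS A N *m expS (- A) N) i j - (1 : 'M[C]_n) i j =
   (\sum_(0 <= k < N) \sum_(0 <= l < N | (N <= k + l)%N)
      ((k`!%:R^-1 * l`!%:R^-1) *: (A ^+ k *m (- A) ^+ l))) i j.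
  rewrite expS_prod cauchy_split mid_sum //.
  by rewrite [in LHS]mxE addrAC subrr add0r.
rewrite summxE; apply: (le_trans (ler_norm_sum _ _ _)).
rewrite /Etail mulr_sumr rmorph_sum; apply: ler_sum => k _.
rewrite summxE; apply: (le_trans (ler_norm_sum _ _ _)).
rewrite mulr_sumr rmorph_sum; apply: ler_sum => l _.
rewrite mxE normrM mulrCA rmorphM /=.
apply: ler_pM; [exact: normr_ge0|exact: normr_ge0| |].
  by rewrite normrM !normfV !normr_nat rmorphM /= !fmorphV /= !rmorph_nat.
apply: prod_bound; first by move=> ? ?; apply: pow_bound.
by move=> ? ?; rewrite -mxb_opp; apply: pow_bound.
Qed.

Lemma Etail_eq (b : R) N :
  Etail b N = series (exp_coeff b) N * series (exp_coeff b) N - series (exp_coeff (b + b)) N.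
Proof.
have := cauchy_split (fun k l => (k`!%:R^-1 * l`!%:R^-1) * (b ^+ k * b ^+ l)) N.
rewrite -/(Etail b N) => h.
have -> : series (exp_coeff b) N * series (exp_coeff b) N =
   \sum_(0 <= k < N) \sum_(0 <= l < N) ((k`!%:R^-1 * l`!%:R^-1) * (b ^+ k * b ^+ l)).
  rewrite /series /= mulr_suml; apply: eq_bigr => k _.
  rewrite mulr_sumr; apply: eq_bigr => l _ /=; rewrite /exp_coeff /=.
  by rewrite mulrACA mulrC [_ * l`!%:R^-1]mulrC mulrACA.
rewrite h; have -> : series (exp_coeff (b + b)) N =
   \sum_(0 <= m < N) \sum_(0 <= i < m.+1) (((m - i)`!%:R^-1 * i`!%:R^-1) * (b ^+ (m - i) * b ^+ i)).
  by rewrite /series /=; apply: eq_bigr => m _; rewrite binom_sum /exp_coeff /= mulrC.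
by rewrite addrC addKr.
Qed.

Lemma Etail_cvg (b : R) : (fun N => n%:R * Etail b N) @ \oo --> 0.
Proof.
have P : series (exp_coeff b) @ \oo --> expR b by apply: is_cvg_series_exp_coeff.
have Q : series (exp_coeff (b + b)) @ \oo --> expR (b + b) by apply: is_cvg_series_exp_coeff.
have -> : (0 : R) = n%:R * (expR b * expR b - expR (b + b)) by rewrite expRD subrr mulr0.
apply: cvgM; first exact: cvg_cst.
have -> : Etail b = (fun N => series (exp_coeff b) N * series (exp_coeff b) N - series (exp_coeff (b + b)) N).
  by apply: funext => N; apply: Etail_eq.
by apply: cvgB => //; apply: cvgM.
Qed.

Lemma expmx_unit A : expmx A *m expmx (- A) = 1.
Proof.
apply: (@mxcvg_unique _ _ _ (fun N => expS A N *m expS (- A) N)).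
  exact: mxcvg_mul (expS_cvg A) (expS_cvg (- A)).
apply: (mxcvg_le _ (Etail_cvg (mxb A))) => N N0 i j.
exact: unit_bound.
Qed.

End ExpProps.

Section LinAlg.
Variable R : realType.
Local Notation C := (R[i]).
Local Notation cj := (map_mx (@conjc R)).

Lemma sum_tens m n (F : 'I_(m * n) -> C) :
  \sum_k F k = \sum_(i < m) \sum_(j < n) F (mxtens_index (i, j)).
Proof.
rewrite pair_big /= (reindex (@mxtens_index m n)) /=; last first.
  by exists (@mxtens_unindex m n) => k _; rewrite (mxtens_indexK, mxtens_unindexK).
by apply: eq_bigr => -[i j] _.
Qed.

Lemma tr_delta n (X : 'M[C]_n) i j : \tr (X *m delta_mx j i) = X i j.
Proof.
rewrite /mxtrace (bigD1 i) //= big1 ?addr0.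
  rewrite mxE (bigD1 j) //= big1 ?addr0; first by rewrite mxE !eqxx mulr1.
  by move=> k /negPf kj; rewrite mxE kj mulr0.
move=> k /negPf ki; rewrite mxE big1 // => l _; rewrite mxE ki andbF mulr0.
by [].
Qed.

Lemma mx_ext_tr n (M M' : 'M[C]_n) :
  (forall A : 'M[C]_n, \tr (M *m A) = \tr (M' *m A)) -> M = M'.
Proof. by move=> h; apply/matrixP => i j; rewrite -tr_delta h tr_delta. Qed.

Lemma tens11 m n : (1%:M : 'M[C]_m) *t (1%:M : 'M[C]_n) = 1%:M.
Proof.
apply/matrixP => p q.
case: (mxtens_indexP p) => i j; case: (mxtens_indexP q) => k l.
rewrite tensmxE !mxE (inj_eq (can_inj (@mxtens_indexK m n))) xpair_eqE.
by case: (i == k); case: (j == l); rewrite /= ?mulr1 ?mulr0.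
Qed.

Lemma ptrE_tens m n (X : 'M[C]_m) (Y : 'M[C]_n) : ptrE (X *t Y) = \tr Y *: X.
Proof.
apply/matrixP => i k; rewrite !mxE /mxtrace mulr_suml; apply: eq_bigr => j _.
by rewrite tensmxE mulrC.
Qed.

Lemma tr_ptrE m n (Z : 'M[C]_(m * n)) (A : 'M[C]_m) :
  \tr (ptrE Z *m A) = \tr (Z *m (A *t 1%:M)).
Proof.
rewrite /mxtrace sum_tens; apply: eq_bigr => i _.
rewrite mxE.
under eq_bigr do rewrite mxE mulr_suml.
rewrite exchange_big /=; apply: eq_bigr => j _.
rewrite mxE sum_tens; apply: eq_bigr => k _.
rewrite (bigD1 j) //= big1 ?addr0.
  by rewrite tensmxE mxE eqxx mulr1.
by move=> l /negPf lj; rewrite tensmxE mxE lj /= !mulr0.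
Qed.

Lemma ptrE_cj m n (Z : 'M[C]_(m * n)) : ptrE (cj Z) = cj (ptrE Z).
Proof.
apply/matrixP => i k; rewrite !mxE rmorph_sum; apply: eq_bigr => j _.
by rewrite mxE.
Qed.

Lemma ptrE_adj m n (Z : 'M[C]_(m * n)) : adjmx (ptrE Z) = ptrE (adjmx Z).
Proof.
apply/matrixP => i k; rewrite !mxE rmorph_sum; apply: eq_bigr => j _.
by rewrite !mxE.
Qed.

Lemma ptrE_L m n (Z : 'M[C]_(m * n)) (X Y : 'M[C]_m) :
  ptrE ((X *t 1%:M) *m Z *m (Y *t 1%:M)) = X *m ptrE Z *m Y.
Proof.
apply: mx_ext_tr => A.
rewrite tr_ptrE -!mulmxA mxtrace_mulC -!mulmxA !tensmx_mul !mulmx1.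
have -> : \tr (X *m (ptrE Z *m (Y *m A))) = \tr (ptrE Z *m (Y *m (A *m X))).
  by rewrite mxtrace_mulC -!mulmxA.
by rewrite tr_ptrE.
Qed.

Lemma ptrE_R m n (Z : 'M[C]_(m * n)) (Y Y' : 'M[C]_n) : Y' *m Y = 1%:M ->
  ptrE ((1%:M *t Y) *m Z *m (1%:M *t Y')) = ptrE Z.
Proof.
move=> h; apply: mx_ext_tr => A.
rewrite !tr_ptrE -!mulmxA mxtrace_mulC -!mulmxA !tensmx_mul !mulmx1 !mul1mx h.
by [].
Qed.

Lemma adjmxK m n (X : 'M[C]_(m, n)) : adjmx (adjmx X) = X.
Proof. by apply/matrixP => i j; rewrite !mxE conjcK. Qed.

Lemma adjmx_mul m n p (X : 'M[C]_(m, n)) (Y : 'M[C]_(n, p)) :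
  adjmx (X *m Y) = adjmx Y *m adjmx X.
Proof. by rewrite /adjmx trmx_mul map_mxM. Qed.

Lemma adjmxD m n (X Y : 'M[C]_(m, n)) : adjmx (X + Y) = adjmx X + adjmx Y.
Proof. by rewrite /adjmx linearD /= map_mxD. Qed.

Lemma adjmxZ m n c (X : 'M[C]_(m, n)) : adjmx (c *: X) = conjc c *: adjmx X.
Proof. by rewrite /adjmx linearZ /= map_mxZ. Qed.

Lemma adjmx1 m : adjmx (1%:M : 'M[C]_m) = 1%:M.
Proof. by rewrite /adjmx trmx1 map_mx1. Qed.

Lemma adjmx_tens m n p q (X : 'M[C]_(m, n)) (Y : 'M[C]_(p, q)) :
  adjmx (X *t Y) = adjmx X *t adjmx Y.
Proof. by rewrite /adjmx trmx_tens map_mxT. Qed.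

Lemma cjK m n (X : 'M[C]_(m, n)) : cj (cj X) = X.
Proof. by apply/matrixP => i j; rewrite !mxE conjcK. Qed.

Lemma adj_cj m n (X : 'M[C]_(m, n)) : adjmx (cj X) = X^T.
Proof. by apply/matrixP => i j; rewrite !mxE conjcK. Qed.

Lemma cj_adj m n (X : 'M[C]_(m, n)) : cj (adjmx X) = X^T.
Proof. by apply/matrixP => i j; rewrite !mxE conjcK. Qed.

Lemma tr_cj n (X : 'M[C]_n) : \tr (cj X) = conjc (\tr X).
Proof. by rewrite /mxtrace rmorph_sum; apply: eq_bigr => i _; rewrite mxE. Qed.

Lemma mx_ext_v n (M M' : 'M[C]_n) : (forall v : 'cV[C]_n, M *m v = M' *m v) -> M = M'.
Proof.
move=> h; apply/matrixP => i j.
by have := congr1 (fun X : 'cV[C]_n => X i 0) (h (delta_mx j 0)); rewrite -!colE !mxE.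
Qed.

Lemma mx_of_lin n (M : 'M[C]_n) : mx_of (fun v => M *m v) = M.
Proof. by apply/matrixP => i j; rewrite mxE -colE mxE. Qed.

End LinAlg.

Section Anti.
Variable R : realType.
Local Notation C := (R[i]).
Local Notation cj := (map_mx (@conjc R)).
Variable n : nat.
Variable th : 'cV[C]_n -> 'cV[C]_n.
Hypothesis hth : antiunitary th.

Lemma anti_add u v : th (u + v) = th u + th v.
Proof. by have := hth.1 1 u v; rewrite scale1r conjc1 scale1r. Qed.

Lemma anti_0 : th 0 = 0.
Proof. by have := anti_add 0 0; rewrite addr0 => h; apply: (addrI (th 0)); rewrite addr0 -h. Qed.

Lemma anti_scale a u : th (a *: u) = conjc a *: th u.
Proof. by have := hth.1 a u 0; rewrite !addr0 anti_0 addr0. Qed.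

Lemma anti_mx v : th v = mx_of th *m cj v.
Proof.
rewrite {1}(matrix_sum_delta v) (big_morph _ anti_add anti_0).
under eq_bigr do rewrite big_ord1 anti_scale.
apply/matrixP => i k; rewrite [k]ord1 summxE !mxE; apply: eq_bigr => j _.
by rewrite !mxE [RHS]mulrC.
Qed.

Lemma delta_adj i : adjmx (delta_mx i 0 : 'cV[C]_n) = delta_mx 0 i.
Proof. by apply/matrixP => a b; rewrite !mxE conjc_nat andbC. Qed.

Lemma quad_entry (M : 'M[C]_n) i j :
  (adjmx (delta_mx i 0 : 'cV[C]_n) *m M *m (delta_mx j 0 : 'cV[C]_n)) 0 0 = M i j.
Proof. by rewrite delta_adj -rowE -colE !mxE. Qed.

Lemma anti_unit : adjmx (mx_of th) *m mx_of th = 1%:M.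
Proof.
apply/matrixP => i j.
have h := hth.2 (cj (delta_mx i 0)) (cj (delta_mx j 0)).
move: h; rewrite /cdot !anti_mx !cjK adjmx_mul mulmxA -[_ *m adjmx (mx_of th) *m mx_of th]mulmxA quad_entry => ->.
have -> : forall (X : 'M[C]_1), conjc (X 0 0) = (cj X) 0 0 by move=> X; rewrite mxE.
rewrite map_mxM cjK.
change (((cj (delta_mx i 0 : 'cV[C]_n))^T *m cj (cj (delta_mx j 0 : 'cV[C]_n))) 0 0 = 1%:M i j).
rewrite cjK.
have -> : (cj (delta_mx i 0 : 'cV[C]_n))^T = adjmx (delta_mx i 0 : 'cV[C]_n).
  by apply/matrixP => a b; rewrite !mxE.
by have := quad_entry 1%:M i j; rewrite mulmx1 => <-.
Qed.

End Anti.

Lemma anti_inv (R : realType) n (th : 'cV[R[i]]_n -> 'cV[R[i]]_n) :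
  antiunitary_involution th -> mx_of th *m map_mx (@conjc R) (mx_of th) = 1%:M.
Proof.
move=> [ha hi]; apply: mx_ext_v => v.
have := hi v; rewrite !(anti_mx ha) map_mxM cjK mulmxA => ->.
by rewrite mul1mx.
Qed.

Lemma anti_adj (R : realType) n (th : 'cV[R[i]]_n -> 'cV[R[i]]_n) :
  antiunitary_involution th -> adjmx (mx_of th) = map_mx (@conjc R) (mx_of th).
Proof.
move=> h; have := anti_inv h; have := anti_unit h.1 => h1 h2.
by rewrite -[adjmx _]mulmx1 -h2 mulmxA h1 mul1mx.
Qed.

Lemma conj_c (R : realType) (tau : R) :
  conjc (- ('i * (tau%:C)%C) : R[i]) = - (- ('i * (tau%:C)%C)).
Proof. by apply/eqP; rewrite eq_complex /=; apply/andP; split; apply/eqP; ring. Qed.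

Lemma conj_antiE (R : realType) n (th : 'cV[R[i]]_n -> 'cV[R[i]]_n) X :
  antiunitary th ->
  conj_anti th X = mx_of th *m map_mx (@conjc R) X *m map_mx (@conjc R) (mx_of th).
Proof.
move=> h; rewrite /conj_anti.
have -> : (fun v => th (X *m th v)) =
   (fun v => (mx_of th *m map_mx (@conjc R) X *m map_mx (@conjc R) (mx_of th)) *m v).
  apply: funext => v; rewrite !(anti_mx h) !map_mxM cjK !mulmxA.
  by [].
by rewrite mx_of_lin.
Qed.

Lemma comm_of (R : realType) n (th : 'cV[R[i]]_n -> 'cV[R[i]]_n) (X : 'M[R[i]]_n) :
  antiunitary th -> (forall v, th (X *m v) = X *m th v) ->
  mx_of th *m map_mx (@conjc R) X = X *m mx_of th.
Proof.
move=> h hX; apply: mx_ext_v => v.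
have := hX (map_mx (@conjc R) v); rewrite !(anti_mx h) map_mxM cjK !mulmxA.
by [].
Qed.

Lemma conj_ge0_eq (R : realType) (x : R[i]) : 0 <= x -> conjc x = x.
Proof. by move=> /ger0_Im; case: x => a b /= ->; rewrite oppr0. Qed.

Lemma tr_of_adj (R : realType) n (X : 'M[R[i]]_n) : adjmx X = map_mx conjc X -> X^T = X.
Proof.
move=> h; apply/matrixP => i j; have := congr1 (fun M : 'M[R[i]]_n => M j i) h.
rewrite !mxE => e; apply: (can_inj (@conjcK _)); by rewrite e.
Qed.

Lemma tr_of_sa (R : realType) n (X : 'M[R[i]]_n) : adjmx X = X -> X^T = map_mx conjc X.
Proof.
move=> h; apply/matrixP => i j; have := congr1 (fun M : 'M[R[i]]_n => M j i) h.
by rewrite !mxE => <-.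
Qed.

Lemma assoc5 (R : realType) n (a b c d e : 'M[R[i]]_n) :
  a *m b *m c *m (d *m e) = a *m (b *m c *m d) *m e.
Proof. by rewrite !mulmxA. Qed.

Lemma conj_chain (R : realType) n (W W' x1 x2 x3 x4 y1 y2 y3 y4 : 'M[R[i]]_n) :
  W *m x1 = y1 *m W -> W *m x2 = y2 *m W -> W *m x3 = y3 *m W -> W *m x4 = y4 *m W ->
  W *m W' = 1%:M -> W *m (x1 *m x2 *m x3 *m x4) *m W' = y1 *m y2 *m y3 *m y4.
Proof.
move=> h1 h2 h3 h4 hW.
rewrite !mulmxA h1 -[y1 *m W *m x2]mulmxA h2 mulmxA.
rewrite -[y1 *m y2 *m W *m x3]mulmxA h3 mulmxA.
rewrite -[y1 *m y2 *m y3 *m W *m x4]mulmxA h4 mulmxA.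
by rewrite -mulmxA hW mulmx1.
Qed.

Notation cj := (map_mx conjc).
Local Close Scope complex_scope.
Local Close Scope classical_set_scope.

Lemma conj_c' (R : realType) (tau : R) :
  conjc (- ('i * (tau%:C)%C) : R[i]) = - (- ('i * (tau%:C)%C)).
Proof. by apply/eqP; rewrite eq_complex /=; apply/andP; split; apply/eqP; ring. Qed.

Theorem mainTheorem11 (R : realType) (nS nE : nat)
  (thS : 'cV[R[i]]_nS -> 'cV[R[i]]_nS) (thE : 'cV[R[i]]_nE -> 'cV[R[i]]_nE)
  (HS : 'M[R[i]]_nS) (HE : 'M[R[i]]_nE) (V : 'M[R[i]]_(nS * nE))
  (tau : R) (rhoE : 'M[R[i]]_nE) (rho : 'M[R[i]]_nS) :
  antiunitary_involution thS -> antiunitary_involution thE ->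
  selfadj HS -> selfadj HE ->
  (forall v, thS (HS *m v) = HS *m thS v) ->
  (forall v, thE (HE *m v) = HE *m thE v) ->
  selfadj V ->
  (forall v, tens_anti thS thE (V *m v) = V *m tens_anti thS thE v) ->
  0 < tau ->
  is_state rhoE -> conj_anti thE rhoE = rhoE ->
  let H := HS *t (1%:M : 'M[R[i]]_nE) + (1%:M : 'M[R[i]]_nS) *t HE + V in
  let U := expmx ((- ('i * (tau%:C)%C)) *: H) in
  let L := fun X : 'M[R[i]]_nS => ptrE (U *m (X *t rhoE) *m adjmx U) in
  primitive L ->
  is_state rho -> L rho = rho ->
  (forall sigma, is_state sigma -> L sigma = sigma -> sigma = rho) ->
  U *m (rho *t rhoE) *m adjmx U = L rho *t rhoE ->
  conj_anti thS rho = rho /\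
  (forall A B : 'M[R[i]]_nS,
     ip_rho rho (dualmap L A) B
     = ip_rho rho A (conj_anti thS (dualmap L (conj_anti thS B)))).
Proof.
move=> hS hE hHS hHE hSH hEH hV hVth tau0 hrE hrEth H U L _ hrho hLrho huniq hprod.
pose TS := mx_of thS; pose TE := mx_of thE; pose W := TS *t TE.
have hthS : forall v, thS v = TS *m cj v by move=> v; apply: anti_mx; case: hS.
have hTS1 : TS *m cj TS = 1%:M by apply: anti_inv.
have hTS2 : cj TS *m TS = 1%:M by apply: mulmx1C.
have hTE1 : TE *m cj TE = 1%:M by apply: anti_inv.
have hTE2 : cj TE *m TE = 1%:M by apply: mulmx1C.
have hTSadj : adjmx TS = cj TS by apply: anti_adj.
have cjW : cj W = cj TS *t cj TE by rewrite map_mxT.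
have hW1 : W *m cj W = 1%:M by rewrite cjW tensmx_mul hTS1 hTE1 tens11.
have hW2 : cj W *m W = 1%:M by apply: mulmx1C.
have ThS : forall X, conj_anti thS X = TS *m cj X *m cj TS by move=> X; apply: conj_antiE; case: hS.
have hHSm : TS *m cj HS = HS *m TS by apply: comm_of => //; case: hS.
have hHEm : TE *m cj HE = HE *m TE by apply: comm_of => //; case: hE.
have hVm : W *m cj V = V *m W.
  apply: mx_ext_v => v; have := hVth (cj v); rewrite /tens_anti -/TS -/TE -/W.
  by rewrite map_mxM cjK !mulmxA.
have hrhoEm : TE *m cj rhoE *m cj TE = rhoE by rewrite -[RHS]hrEth conj_antiE //; case: hE.
have Wdef : W = TS *t TE by [].
clearbody W TS TE.
have e1 : W *m (cj HS *t 1%:M) = (HS *t 1%:M) *m W.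
  by rewrite Wdef !tensmx_mul hHSm mulmx1 mul1mx.
have e2 : W *m (1%:M *t cj HE) = (1%:M *t HE) *m W.
  by rewrite Wdef !tensmx_mul hHEm mulmx1 mul1mx.
have hHm : W *m cj H = H *m W.
  by rewrite /H !map_mxD !map_mxT !map_mx1 !mulmxDr !mulmxDl e1 e2 hVm.
pose c : R[i] := - ('i * (tau%:C)%C).
pose M := c *: H.
have hHadj : adjmx H = H.
  by rewrite /H !adjmxD !adjmx_tens !adjmx1 hHS hHE hV.
have hMadj : adjmx M = - M by rewrite /M adjmxZ hHadj conj_c' scaleNr.
have hMcj : W *m cj M = (- M) *m W.
  have hc : conjc c = - c by apply: conj_c'.
  have -> : cj M = (- c) *: cj H by rewrite /M map_mxZ; congr (_ *: _); exact: hc.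
  by rewrite -scalemxAr hHm scalemxAl /M scaleNr.
have hUadj : adjmx U = expmx (- M) by rewrite /U -/M expmx_adj hMadj.
have hUU1 : U *m adjmx U = 1%:M by rewrite hUadj /U expmx_unit.
have hUU2 : adjmx U *m U = 1%:M by apply: mulmx1C.
have hWU : W *m cj U = adjmx U *m W.
  by rewrite hUadj /U -/M expmx_conj; apply: expmx_comm.
clearbody U.
have hcjWU : cj W *m U = cj (adjmx U) *m cj W.
  by have := congr1 cj hWU; rewrite !map_mxM (cjK U).
have hUW : U *m W = W *m cj (adjmx U).
  by rewrite -[U *m W]mul1mx -hW1 -!mulmxA [cj W *m (U *m W)]mulmxA hcjWU -mulmxA hW2 mulmx1.
have hcjWU' : cj W *m adjmx U = cj U *m cj W.
  by have := congr1 cj hUW; rewrite !map_mxM (cjK (adjmx U)).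
pose P := rho *t rhoE.
have hP : U *m P *m adjmx U = P by rewrite hprod hLrho.
have hP' : adjmx U *m P *m U = P.
  by rewrite -{1}hP !mulmxA hUU2 mul1mx -mulmxA hUU2 mulmx1.
have hPU : P *m adjmx U = adjmx U *m P.
  by rewrite -{1}hP' -!mulmxA hUU1 mulmx1.
have [[hrs hrpos] hrtr] := hrho.
have [[hrEs hrEpos] hrEtr] := hrE.
have hTST : TS^T = TS by apply: tr_of_adj.
have hrT : rho^T = cj rho by apply: tr_of_sa.
pose sig := TS *m cj rho *m cj TS.
have hsig_st : is_state sig.
  split; last by rewrite /sig mxtrace_mulC mulmxA hTS2 mul1mx tr_cj hrtr rmorph1.
  split.
    by rewrite /selfadj /sig !adjmx_mul !adj_cj hTSadj hTST hrT mulmxA.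
  move=> v.
  have -> : sig *m v = thS (rho *m thS v) by rewrite /sig !hthS !map_mxM (cjK v) !mulmxA.
  rewrite -{1}(hS.2 v) hS.1.2 conj_ge0; exact: hrpos.
have hsigP : sig *t rhoE = W *m cj P *m cj W.
  by rewrite cjW Wdef /P map_mxT !tensmx_mul hrhoEm.
have hcjP : cj (adjmx U) *m cj P *m cj U = cj P by rewrite -!map_mxM hP'.
have hLsig : L sig = sig.
  rewrite /L hsigP !mulmxA hUW -!mulmxA hcjWU' !mulmxA.
  rewrite -[W *m cj (adjmx U) *m cj P]mulmxA -[W *m (cj (adjmx U) *m cj P) *m cj U]mulmxA hcjP.
  by rewrite -hsigP ptrE_tens hrEtr scale1r.
have hsig : sig = rho by apply: huniq.
split; first by rewrite ThS.
move=> A B.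
have hdual : forall X, dualmap L X = ptrE ((1%:M *t rhoE) *m adjmx U *m (X *t 1%:M) *m U).
  move=> X; apply/matrixP => i j; rewrite mxE -tr_delta /L !tr_ptrE.
  transitivity (\tr (((delta_mx j i *t rhoE) *m adjmx U *m (X *t 1%:M)) *m U)).
    by rewrite -!mulmxA mxtrace_mulC !mulmxA.
  symmetry; rewrite mxtrace_mulC !mulmxA tensmx_mul mulmx1 mul1mx.
  by [].
have hThetaP : forall Y, conj_anti thS (ptrE Y) = ptrE (W *m cj Y *m cj W).
  move=> Y; rewrite ThS cjW Wdef.
  have -> : TS *t TE = (TS *t 1%:M) *m (1%:M *t TE) by rewrite tensmx_mul mulmx1 mul1mx.
  have -> : cj TS *t cj TE = (1%:M *t cj TE) *m (cj TS *t 1%:M) by rewrite tensmx_mul mulmx1 mul1mx.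
  by rewrite assoc5 ptrE_L ptrE_R // ptrE_cj.
have hTErho : TE *m cj rhoE = rhoE *m TE by rewrite -{2}hrhoEm -mulmxA hTE2 mulmx1.
have Kid : W *m cj ((1%:M *t rhoE) *m adjmx U *m (conj_anti thS B *t 1%:M) *m U) *m cj W
    = (1%:M *t rhoE) *m U *m (B *t 1%:M) *m adjmx U.
  rewrite !map_mxM !map_mxT !map_mx1; apply: conj_chain.
  - by rewrite Wdef !tensmx_mul hTErho mulmx1 mul1mx.
  - by rewrite hUW.
  - rewrite Wdef !tensmx_mul ThS !map_mxM (cjK B) (cjK TS) !mulmxA hTS1 mul1mx.
    by rewrite mulmx1 mul1mx.
  - exact: hWU.
  - exact: hW1.
rewrite !hdual hThetaP Kid /ip_rho ptrE_adj.
rewrite !adjmx_mul !adjmx_tens !adjmx1 adjmxK hrEs.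
pose T0 := \tr (P *m (adjmx A *t 1%:M) *m U *m (B *t 1%:M) *m adjmx U).
have he : (1%:M *t rhoE) *m ((B *m rho) *t 1%:M) = (B *t 1%:M) *m P.
  by rewrite /P !tensmx_mul !mul1mx !mulmx1.
have he2 : ((rho *m adjmx A) *t 1%:M) *m (1%:M *t rhoE) = P *m (adjmx A *t 1%:M).
  by rewrite /P !tensmx_mul !mul1mx !mulmx1.
transitivity T0.
  rewrite -mulmxA mxtrace_mulC -mulmxA tr_ptrE -!mulmxA he.
  rewrite mxtrace_mulC -!mulmxA hPU !mulmxA mxtrace_mulC !mulmxA.
  by [].
symmetry; rewrite mxtrace_mulC tr_ptrE mxtrace_mulC !mulmxA he2.
by [].
Qed.
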